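(* Let $X$ be a complex Banach space, $\mathcal{F}$ an algebra with unit, $\mathcal{E}\subseteq\mathcal{F}$ a subalgebra and $\Phi:\mathcal{E}\to\mathcal{L}(X)$ a non-degenerate algebra representation. Then the set $$\mathrm{anc}(\mathcal{E},\mathcal{F},\Phi):=\{f\in\mathcal{F}: \text{for all } e\in\mathcal{E},\ [ef]_{\mathcal{E}} \text{ is a } \Phi\text{-anchor set}\}$$ is a unital subalgebra of $\mathcal{F}$ that contains $\mathcal{E}$ and is anchored in $\mathcal{E}$. Moreover, $\mathrm{anc}(\mathcal{E},\mathcal{F},\Phi)$ contains every unital subalgebra of $\mathcal{F}$ that contains $\mathcal{E}$ and is anchored in $\mathcal{E}$.
   Context: $\mathcal{F}$ need not be commutative; $\mathcal{E}$ need not be unital. An algebra representation is an algebra homomorphism into $\mathcal{L}(X)$. For $f\in\mathcal{F}$, $[f]_{\mathcal{E}}=\{e\in\mathcal{E}:ef\in\mathcal{E}\}$. A subset $\mathcal{M}\subseteq\mathcal{E}$ is a $\Phi$-anchor set if $\mathcal{M}\neq\emptyset$ and $\bigcap_{e\in\mathcal{M}}\ker\Phi(e)=\{0\}$. $f$ is anchored in $\mathcal{E}$ if $[f]_{\mathcal{E}}$ is a $\Phi$-anchor set; a subset of $\mathcal{F}$ is anchored in $\mathcal{E}$ if all its elements are. $\Phi$ is non-degenerate if $\mathcal{E}$ itself is a $\Phi$-anchor set. *)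

(* Defs.v *)
From HB Require Import structures.
From mathcomp Require Import all_boot all_order all_algebra.
From mathcomp Require Import complex.
From mathcomp Require Import all_classical all_reals all_analysis.
Import GRing.Theory Num.Theory.
Set Implicit Arguments. Unset Strict Implicit. Unset Printing Implicit Defensive.
Local Open Scope ring_scope.

Definition is_subalgebra (K : pzRingType) (F : algType K) (A : F -> Prop) : Prop :=
  [/\ A 0,
      (forall a b, A a -> A b -> A (a + b)),
      (forall (c : K) a, A a -> A (c *: a)) &
      (forall a b, A a -> A b -> A (a * b))].

Definition is_unital_subalgebra (K : pzRingType) (F : algType K) (A : F -> Prop) : Prop :=
  is_subalgebra A /\ A 1.

(* Values of Phi outside E
   are irrelevant. *)
Definition is_algebra_rep (R : realType) (X : normedModType R[i])
  (F : algType R[i]) (E : F -> Prop) (Phi : F -> X -> X) : Prop :=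
  [/\ (forall e, E e -> forall (c : R[i]) (x y : X), Phi e (c *: x + y) = c *: Phi e x + Phi e y),
      (forall e, E e -> continuous (Phi e)),
      (forall e1 e2, E e1 -> E e2 -> forall (c : R[i]) (x : X),
          Phi (c *: e1 + e2) x = c *: Phi e1 x + Phi e2 x) &
      (forall e1 e2, E e1 -> E e2 -> forall x : X, Phi (e1 * e2) x = Phi e1 (Phi e2 x))].

Definition bracket (K : pzRingType) (F : algType K) (E : F -> Prop) (f : F) : F -> Prop :=
  fun e => E e /\ E (e * f).

Definition anchor_set (K : pzRingType) (F : algType K) (X : zmodType)
  (Phi : F -> X -> X) (M : F -> Prop) : Prop :=
  (exists e, M e) /\ (forall x : X, (forall e, M e -> Phi e x = 0) -> x = 0).

Definition anchored (K : pzRingType) (F : algType K) (X : zmodType)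
  (E : F -> Prop) (Phi : F -> X -> X) (f : F) : Prop :=
  anchor_set Phi (bracket E f).

Definition set_anchored (K : pzRingType) (F : algType K) (X : zmodType)
  (E : F -> Prop) (Phi : F -> X -> X) (A : F -> Prop) : Prop :=
  forall f, A f -> anchored E Phi f.

Definition rep_nondegenerate (K : pzRingType) (F : algType K) (X : zmodType)
  (E : F -> Prop) (Phi : F -> X -> X) : Prop :=
  anchor_set Phi E.

Definition anc (K : pzRingType) (F : algType K) (X : zmodType)
  (E : F -> Prop) (Phi : F -> X -> X) : F -> Prop :=
  fun f => forall e, E e -> anchor_set Phi (bracket E (e * f)).

(* Main.v *)
Require Import Defs.
From HB Require Import structures.
From mathcomp Require Import all_boot all_order all_algebra.
From mathcomp Require Import complex.
From mathcomp Require Import all_classical all_reals all_analysis.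
Import GRing.Theory Num.Theory.
Local Open Scope ring_scope.

Lemma anchor_sup (K : pzRingType) (F : algType K) (X : zmodType)
  (Phi : F -> X -> X) (M P : F -> Prop) :
  (forall e, M e -> P e) -> anchor_set Phi M -> anchor_set Phi P.
Proof.
move=> MP [[e Me] H]; split; first by exists e; apply: MP.
move=> x Hx; apply: H => e' Me'; apply: Hx; exact: MP.
Qed.

Lemma compose_anchor (K : pzRingType) (F : algType K) (X : zmodType)
  (E : F -> Prop) (Phi : F -> X -> X)
  (M : F -> Prop) (N : F -> F -> Prop) (P : F -> Prop) :
  (forall e1 e2, E e1 -> E e2 -> forall x : X, Phi (e1 * e2) x = Phi e1 (Phi e2 x)) ->
  (forall e, M e -> E e) -> (forall e1 e2, M e1 -> N e1 e2 -> E e2) ->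
  anchor_set Phi M -> (forall e1, M e1 -> anchor_set Phi (N e1)) ->
  (forall e1 e2, M e1 -> N e1 e2 -> P (e2 * e1)) -> anchor_set Phi P.
Proof.
move=> Hm ME NE [[e1 Me1] HM] HN HP; split.
  have [[e2 Ne2] _] := HN e1 Me1; exists (e2 * e1); exact: HP.
move=> x Hx; apply: HM => e Me.
have [_ HNk] := HN e Me; apply: HNk => e2 Ne2.
rewrite -Hm; [apply: Hx; exact: HP| exact: (NE e)|exact: ME].
Qed.

Lemma generic (K : pzRingType) (F : algType K) (X : zmodType)
  (E : F -> Prop) (Phi : F -> X -> X) :
  is_subalgebra E ->
  (forall e1 e2, E e1 -> E e2 -> forall x : X, Phi (e1 * e2) x = Phi e1 (Phi e2 x)) ->
  rep_nondegenerate E Phi ->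
  [/\ is_unital_subalgebra (anc E Phi),
      (forall e, E e -> anc E Phi e),
      set_anchored E Phi (anc E Phi) &
      (forall A : F -> Prop, is_unital_subalgebra A -> (forall e, E e -> A e) ->
         set_anchored E Phi A -> forall f, A f -> anc E Phi f)].
Proof.
move=> [E0 ED EZ EM] Hm ND.
have EincA : forall e, E e -> anc E Phi e.
  move=> e Ee e' Ee'; apply: anchor_sup ND => e2 Ee2; split => //.
  exact: (EM _ _ Ee2 (EM _ _ Ee' Ee)).
split => //.
- split; last first.
    move=> e Ee; rewrite mulr1; apply: anchor_sup ND => e2 Ee2; split => //.
    exact: (EM _ _ Ee2 Ee).
  split.
  + move=> e Ee; rewrite mulr0; apply: anchor_sup ND => e2 Ee2; split => //.
    by rewrite mulr0.
  + move=> f g Hf Hg e Ee.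
    apply: (@compose_anchor _ F _ E Phi (bracket E (e * f))
             (fun e1 => bracket E ((e1 * e) * g)) _ Hm) => //.
    * by move=> e1 [].
    * by move=> e1 e2 _ [].
    * by apply: Hf.
    * by move=> e1 [Ee1 _]; apply: Hg; exact: (EM _ _ Ee1 Ee).
    * move=> e1 e2 [Ee1 Ef] [Ee2 Eg]; split; first exact: (EM _ _ Ee2 Ee1).
      rewrite !mulrDr; apply: (ED _ _ _ _).
        by rewrite -mulrA; exact: (EM _ _ Ee2 Ef).
      by move: Eg; rewrite -!mulrA.
  + move=> c f Hf e Ee; apply: anchor_sup (Hf e Ee) => e2 [Ee2 H]; split => //.
    by rewrite -!scalerAr; exact: (EZ c _ H).
  + move=> f g Hf Hg e Ee.
    apply: (@compose_anchor _ F _ E Phi (bracket E (e * f))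
             (fun e1 => bracket E ((e1 * (e * f)) * g)) _ Hm) => //.
    * by move=> e1 [].
    * by move=> e1 e2 _ [].
    * by apply: Hf.
    * by move=> e1 [Ee1 Ef]; apply: Hg.
    * move=> e1 e2 [Ee1 Ef] [Ee2 Eg]; split; first exact: (EM _ _ Ee2 Ee1).
      by move: Eg; rewrite -!mulrA.
- move=> f Hf.
  apply: (@compose_anchor _ F _ E Phi E (fun e1 => bracket E (e1 * f)) _ Hm) => //.
  + by move=> e1 e2 _ [].
  + move=> e1 e2 Ee1 [Ee2 H]; split; first exact: (EM _ _ Ee2 Ee1).
    by rewrite -mulrA; exact: H.
- move=> A [[_ _ _ AM] _] EA HA f Af.
  rewrite /anc => e Ee.
  exact: (HA (e * f) (AM e f (EA e Ee) Af)).
Qed.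

Theorem theorem6p4 (R : realType) (X : completeNormedModType R[i])
  (F : algType R[i]) (E : F -> Prop) (Phi : F -> X -> X) :
  is_subalgebra E ->
  is_algebra_rep E Phi ->
  rep_nondegenerate E Phi ->
  [/\ is_unital_subalgebra (anc E Phi),
      (forall e, E e -> anc E Phi e),
      set_anchored E Phi (anc E Phi) &
      (forall A : F -> Prop, is_unital_subalgebra A -> (forall e, E e -> A e) ->
         set_anchored E Phi A -> forall f, A f -> anc E Phi f)].
Proof.
move=> HE [_ _ _ Hm] ND.
Time have G := @generic _ F (@complete_normed_module_CompleteNormedModule__to__Algebra_Zmodule _ X) E Phi HE Hm ND.
Time exact G.
Time Qed.
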